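(* Let $A=(A,\oplus,\odot)$ be a skew brace, $D$ a cyclic characteristic subgroup of $A_{\oplus}$, and $B=C_{A_{\oplus}}(D)$ the centralizer of $D$ in $A_{\oplus}$. For $x\in A$ denote by $\overline{x}$ the image of $x$ under the natural homomorphism $A_{\oplus}\to A_{\oplus}/B$. Then there exists a positive integer $m$ such that for all $a,b\in A_{\odot}^{(m)}$ the equalities $\overline{a\odot b}=\overline{a\oplus b}$ and $\overline{a^{-1}}=\overline{\ominus a}$ hold.
   Context: A skew brace is a set $A$ with two binary operations $\oplus,\odot$ such that $A_{\oplus}=(A,\oplus)$ and $A_{\odot}=(A,\odot)$ are groups and $a\odot(b\oplus c)=(a\odot b)\ominus a\oplus(a\odot c)$ for all $a,b,c\in A$, where $\ominus a$ is the inverse of $a$ in $A_{\oplus}$ and $a^{-1}$ is the inverse of $a$ in $A_{\odot}$. The derived series of a group $G$ is indexed by $G^{(1)}=G$, $G^{(i+1)}=[G^{(i)},G^{(i)}]$. The subgroup $D$ may be finite or infinite cyclic. *)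

(* Defs.v *)
(* skew braces may be infinite, so groups are given abstractly
   by a carrier type and explicit operations. *)
From Stdlib Require Import ZArith.

Section GroupDefs.
Variable T : Type.

Definition is_group (op : T -> T -> T) (e : T) (inv : T -> T) : Prop :=
  (forall x y z, op x (op y z) = op (op x y) z) /\
  (forall x, op e x = x) /\ (forall x, op x e = x) /\
  (forall x, op (inv x) x = e) /\ (forall x, op x (inv x) = e).

Definition is_skew_brace (add mul : T -> T -> T) (zero one : T)
  (neg inv : T -> T) : Prop :=
  is_group add zero neg /\ is_group mul one inv /\
  (forall a b c, mul a (add b c) = add (add (mul a b) (neg a)) (mul a c)).

Fixpoint npow (op : T -> T -> T) (e : T) (n : nat) (x : T) : T :=
  match n with O => e | S k => op x (npow op e k x) end.

Definition zpow (op : T -> T -> T) (e : T) (inv : T -> T) (z : Z) (x : T) : T :=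
  match z with
  | Z0 => e
  | Zpos p => npow op e (Pos.to_nat p) x
  | Zneg p => inv (npow op e (Pos.to_nat p) x)
  end.

Definition is_cyclic_subgroup (op : T -> T -> T) (e : T) (inv : T -> T)
  (D : T -> Prop) : Prop :=
  exists g, forall x, D x <-> exists z : Z, x = zpow op e inv z g.

Definition is_automorphism (op : T -> T -> T) (f : T -> T) : Prop :=
  (forall x y, f (op x y) = op (f x) (f y)) /\
  (forall x y, f x = f y -> x = y) /\ (forall y, exists x, f x = y).

Definition is_characteristic (op : T -> T -> T) (H : T -> Prop) : Prop :=
  forall f, is_automorphism op f ->
    forall y, H y <-> exists x, H x /\ f x = y.

Definition centralizer (op : T -> T -> T) (D : T -> Prop) (x : T) : Prop :=
  forall d, D d -> op x d = op d x.

(* images of x and y in the quotient (T,op)/B coincide: x^{-1} y \in B *)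
Definition same_coset (op : T -> T -> T) (inv : T -> T) (B : T -> Prop)
  (x y : T) : Prop := B (op (inv x) y).

Inductive gen (op : T -> T -> T) (e : T) (inv : T -> T) (S : T -> Prop)
  : T -> Prop :=
  | gen_in : forall x, S x -> gen op e inv S x
  | gen_e : gen op e inv S e
  | gen_op : forall x y, gen op e inv S x -> gen op e inv S y ->
      gen op e inv S (op x y)
  | gen_inv : forall x, gen op e inv S x -> gen op e inv S (inv x).

Definition comm (op : T -> T -> T) (inv : T -> T) (x y : T) : T :=
  op (op (inv x) (inv y)) (op x y).

Definition comm_subgroup (op : T -> T -> T) (e : T) (inv : T -> T)
  (H : T -> Prop) : T -> Prop :=
  gen op e inv (fun z => exists x y, H x /\ H y /\ z = comm op inv x y).

(* derived series, indexed from 1: G^(1) = G, G^(i+1) = [G^(i), G^(i)];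
   derived 0 is set (conventionally) to G as well. *)
Fixpoint derived (op : T -> T -> T) (e : T) (inv : T -> T) (n : nat)
  : T -> Prop :=
  match n with
  | O => fun _ => True
  | S k => match k with
           | O => fun _ => True
           | S _ => comm_subgroup op e inv (derived op e inv k)
           end
  end.

End GroupDefs.

Arguments is_group {T}.
Arguments is_skew_brace {T}.
Arguments npow {T}.
Arguments zpow {T}.
Arguments is_cyclic_subgroup {T}.
Arguments is_automorphism {T}.
Arguments is_characteristic {T}.
Arguments centralizer {T}.
Arguments same_coset {T}.
Arguments gen {T}.
Arguments comm {T}.
Arguments comm_subgroup {T}.
Arguments derived {T}.

(* Main.v *)
Require Import Defs.
From Stdlib Require Import ZArith Lia.

Lemma g_assocR {T} {op : T -> T -> T} {e inv} (G : is_group op e inv) x y z :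
  op (op x y) z = op x (op y z).
Proof. destruct G as [H _]. now rewrite H. Qed.
Lemma g_idl {T} {op : T -> T -> T} {e inv} (G : is_group op e inv) x : op e x = x.
Proof. apply G. Qed.
Lemma g_idr {T} {op : T -> T -> T} {e inv} (G : is_group op e inv) x : op x e = x.
Proof. apply G. Qed.
Lemma g_invl {T} {op : T -> T -> T} {e inv} (G : is_group op e inv) x : op (inv x) x = e.
Proof. apply G. Qed.
Lemma g_invr {T} {op : T -> T -> T} {e inv} (G : is_group op e inv) x : op x (inv x) = e.
Proof. apply G. Qed.
Lemma g_canl {T} {op : T -> T -> T} {e inv} (G : is_group op e inv) x y :
  op x (op (inv x) y) = y.
Proof. rewrite <- (g_assocR G), (g_invr G), (g_idl G). reflexivity. Qed.
Lemma g_canl' {T} {op : T -> T -> T} {e inv} (G : is_group op e inv) x y :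
  op (inv x) (op x y) = y.
Proof. rewrite <- (g_assocR G), (g_invl G), (g_idl G). reflexivity. Qed.
Lemma g_cancel {T} {op : T -> T -> T} {e inv} (G : is_group op e inv) x y z :
  op x y = op x z -> y = z.
Proof. intro H. rewrite <- (g_canl' G x y), H, (g_canl' G). reflexivity. Qed.
Lemma g_inv_unique {T} {op : T -> T -> T} {e inv} (G : is_group op e inv) x y :
  op x y = e -> y = inv x.
Proof. intro H. rewrite <- (g_canl' G x y), H, (g_idr G). reflexivity. Qed.
Lemma g_inv_inv {T} {op : T -> T -> T} {e inv} (G : is_group op e inv) x :
  inv (inv x) = x.
Proof. symmetry. apply (g_inv_unique G). apply (g_invl G). Qed.
Lemma g_inv_e {T} {op : T -> T -> T} {e inv} (G : is_group op e inv) : inv e = e.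
Proof. symmetry. apply (g_inv_unique G). apply (g_idl G). Qed.
Lemma g_inv_op {T} {op : T -> T -> T} {e inv} (G : is_group op e inv) x y :
  inv (op x y) = op (inv y) (inv x).
Proof. symmetry. apply (g_inv_unique G).
  rewrite (g_assocR G), (g_canl G), (g_invr G). reflexivity. Qed.

Lemma npow_add {T} {op : T -> T -> T} {e inv} (G : is_group op e inv) n m x :
  npow op e (n + m) x = op (npow op e n x) (npow op e m x).
Proof. induction n; simpl. now rewrite (g_idl G). now rewrite IHn, (g_assocR G). Qed.
Lemma npow_mul {T} {op : T -> T -> T} {e inv} (G : is_group op e inv) n m x :
  npow op e (n * m) x = npow op e n (npow op e m x).
Proof. induction n; simpl. reflexivity. now rewrite (npow_add G), IHn. Qed.
Lemma npow_comm {T} {op : T -> T -> T} {e inv} (G : is_group op e inv) n m x :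
  npow op e n (npow op e m x) = npow op e m (npow op e n x).
Proof. rewrite <- !(npow_mul G), Nat.mul_comm. reflexivity. Qed.
Lemma npow_xcomm {T} {op : T -> T -> T} {e inv} (G : is_group op e inv) n x :
  op x (npow op e n x) = op (npow op e n x) x.
Proof. induction n; simpl. now rewrite (g_idl G), (g_idr G).
  now rewrite (g_assocR G), <- IHn. Qed.
Lemma npow_inv {T} {op : T -> T -> T} {e inv} (G : is_group op e inv) n x :
  npow op e n (inv x) = inv (npow op e n x).
Proof. induction n; simpl. now rewrite (g_inv_e G).
  now rewrite IHn, <- (g_inv_op G), (npow_xcomm G). Qed.
Lemma npow_e {T} {op : T -> T -> T} {e inv} (G : is_group op e inv) n :
  npow op e n e = e.
Proof. induction n; simpl. reflexivity. now rewrite IHn, (g_idl G). Qed.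

Lemma zpow_comm {T} {op : T -> T -> T} {e inv} (G : is_group op e inv) k l g :
  zpow op e inv l (zpow op e inv k g) = zpow op e inv k (zpow op e inv l g).
Proof.
  destruct k, l; unfold zpow;
  rewrite ?(npow_e G), ?(g_inv_e G), ?(npow_inv G), ?(g_inv_inv G);
  try rewrite (npow_comm G); reflexivity.
Qed.

Lemma hom_e {T} {op : T -> T -> T} {e inv} (G : is_group op e inv) f :
  (forall x y, f (op x y) = op (f x) (f y)) -> f e = e.
Proof. intro hf. symmetry. apply (g_cancel G (f e)).
  rewrite <- hf, !(g_idr G). reflexivity. Qed.
Lemma hom_inv {T} {op : T -> T -> T} {e inv} (G : is_group op e inv) f :
  (forall x y, f (op x y) = op (f x) (f y)) -> forall x, f (inv x) = inv (f x).
Proof. intros hf x. apply (g_inv_unique G).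
  rewrite <- hf, (g_invr G). apply (hom_e G f hf). Qed.
Lemma hom_npow {T} {op : T -> T -> T} {e inv} (G : is_group op e inv) f :
  (forall x y, f (op x y) = op (f x) (f y)) ->
  forall n x, f (npow op e n x) = npow op e n (f x).
Proof. intros hf n x. induction n; simpl. apply (hom_e G f hf).
  now rewrite hf, IHn. Qed.
Lemma hom_zpow {T} {op : T -> T -> T} {e inv} (G : is_group op e inv) f :
  (forall x y, f (op x y) = op (f x) (f y)) ->
  forall z x, f (zpow op e inv z x) = zpow op e inv z (f x).
Proof. intros hf z x. destruct z; unfold zpow.
  apply (hom_e G f hf). apply (hom_npow G f hf).
  rewrite (hom_inv G f hf), (hom_npow G f hf). reflexivity. Qed.

Theorem proposition4p4 (A : Type) (add mul : A -> A -> A) (zero one : A)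
  (neg inv : A -> A)
  (HA : is_skew_brace add mul zero one neg inv)
  (D : A -> Prop)
  (HDcyc : is_cyclic_subgroup add zero neg D)
  (HDchar : is_characteristic add D) :
  exists m : nat, (0 < m)%nat /\
    forall a b : A,
      derived mul one inv m a -> derived mul one inv m b ->
      same_coset add neg (centralizer add D) (mul a b) (add a b) /\
      same_coset add neg (centralizer add D) (inv a) (neg a).
Proof.
  destruct HA as [Ga [Gm Hd]].
  destruct HDcyc as [g Hg].
  assert (zo : zero = one).
  { pose proof (Hd one zero zero) as H.
    rewrite (g_idl Ga), (g_idl Gm), (g_idr Ga), (g_idl Ga) in H.
    rewrite <- (g_inv_inv Ga one), <- H, (g_inv_e Ga). reflexivity. }
  set (lam := fun a b => add (neg a) (mul a b)).
  assert (mul_as : forall a b, mul a b = add a (lam a b)).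
  { intros a b. unfold lam. now rewrite (g_canl Ga). }
  assert (lam_hom : forall a x y, lam a (add x y) = add (lam a x) (lam a y)).
  { intros a x y. unfold lam. rewrite Hd, !(g_assocR Ga). reflexivity. }
  assert (mul_neg : forall a b, mul a (neg b) = add a (add (neg (mul a b)) a)).
  { intros a b. pose proof (Hd a b (neg b)) as H.
    rewrite (g_invr Ga), zo, (g_idr Gm) in H.
    rewrite <- (g_canl' Ga (add (mul a b) (neg a)) (mul a (neg b))), <- H.
    rewrite (g_inv_op Ga), (g_inv_inv Ga), (g_assocR Ga). reflexivity. }
  assert (lam_comp : forall a b c, lam (mul a b) c = lam a (lam b c)).
  { intros a b c. unfold lam. rewrite Hd, mul_neg, !(g_assocR Ga).
    rewrite (g_canl' Ga), (g_canl Ga), (g_assocR Gm). reflexivity. }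
  assert (lam_one : forall c, lam one c = c).
  { intro c. unfold lam. rewrite (g_idl Gm), <- zo, (g_inv_e Ga), (g_idl Ga).
    reflexivity. }
  assert (lam_inv_l : forall a c, lam (inv a) (lam a c) = c).
  { intros a c. rewrite <- lam_comp, (g_invl Gm). apply lam_one. }
  assert (lam_inv_r : forall a c, lam a (lam (inv a) c) = c).
  { intros a c. rewrite <- lam_comp, (g_invr Gm). apply lam_one. }
  assert (lam_aut : forall a, is_automorphism add (lam a)).
  { intro a. split; [apply lam_hom | split].
    - intros x y H. rewrite <- (lam_inv_l a x), H. apply lam_inv_l.
    - intro y. exists (lam (inv a) y). apply lam_inv_r. }
  set (cj := fun b x => add b (add x (neg b))).
  assert (cj_hom : forall b x y, cj b (add x y) = add (cj b x) (cj b y)).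
  { intros b x y. unfold cj. rewrite !(g_assocR Ga), (g_canl' Ga). reflexivity. }
  assert (cj_inv : forall b x, cj (neg b) (cj b x) = x).
  { intros b x. unfold cj. rewrite (g_inv_inv Ga), !(g_assocR Ga), (g_canl' Ga),
      (g_invl Ga), (g_idr Ga). reflexivity. }
  assert (cj_aut : forall b, is_automorphism add (cj b)).
  { intro b. split; [apply cj_hom | split].
    - intros x y H. rewrite <- (cj_inv b x), H. apply cj_inv.
    - intro y. exists (cj (neg b) y). rewrite <- (g_inv_inv Ga b) at 1.
      apply cj_inv. }
  assert (char_map : forall f d, is_automorphism add f -> D d -> D (f d)).
  { intros f d Hf Hdd. apply (HDchar f Hf (f d)). exists d. auto. }
  assert (comm_lemma : forall f h d, is_automorphism add f ->
            is_automorphism add h -> D d -> f (h d) = h (f d)).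
  { intros f h d Hf Hh Hdd.
    assert (Dg : D g). { apply Hg. exists 1%Z. simpl. now rewrite (g_idr Ga). }
    destruct (proj1 (Hg d) Hdd) as [z Hz]. subst d.
    pose proof (proj1 Hf) as hf. pose proof (proj1 Hh) as hh.
    rewrite (hom_zpow Ga h hh), (hom_zpow Ga f hf), (hom_zpow Ga f hf),
      (hom_zpow Ga h hh).
    f_equal.
    destruct (proj1 (Hg (h g)) (char_map h g Hh Dg)) as [l Hl].
    destruct (proj1 (Hg (f g)) (char_map f g Hf Dg)) as [k Hk].
    rewrite Hl, Hk, (hom_zpow Ga f hf), (hom_zpow Ga h hh), Hl, Hk.
    apply (zpow_comm Ga). }
  assert (fix_gen : forall a, derived mul one inv 2 a ->
            forall d, D d -> lam a d = d).
  { intros a Ha. simpl in Ha. unfold comm_subgroup in Ha.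
    induction Ha as [x [x1 [y1 [_ [_ ->]]]] | | x y _ IHx _ IHy | x _ IHx];
      intros d Hdd.
    - unfold comm. rewrite !lam_comp.
      rewrite (comm_lemma (lam x1) (lam y1) d (lam_aut x1) (lam_aut y1) Hdd).
      rewrite lam_inv_l. apply lam_inv_l.
    - apply lam_one.
    - rewrite lam_comp, IHy; auto.
    - transitivity (lam (inv x) (lam x d)).
      + rewrite IHx; auto.
      + apply lam_inv_l. }
  assert (key : forall a b d, (forall d, D d -> lam a d = d) -> D d ->
     add (lam a b) (add d (neg (lam a b))) = add b (add d (neg b))).
  { intros a b d Hfa Hdd.
    assert (Dd' : D (cj b d)) by (apply char_map; auto).
    pose proof (Hfa _ Dd') as E. unfold cj in E.
    rewrite !lam_hom, (hom_inv Ga (lam a) (lam_hom a)), (Hfa d Hdd) in E.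
    exact E. }
  exists 2. split; [lia|].
  intros a b Ha _. pose proof (fix_gen a Ha) as Hfa.
  split; unfold same_coset, centralizer; intros d Hdd.
  - rewrite mul_as, (g_inv_op Ga), !(g_assocR Ga), !(g_canl' Ga).
    set (u := lam a b).
    assert (E : add b d = add (add b (add d (neg b))) b).
    { rewrite !(g_assocR Ga), (g_invl Ga), (g_idr Ga). reflexivity. }
    rewrite E, <- (key a b d Hfa Hdd). fold u.
    rewrite !(g_assocR Ga), (g_canl' Ga). reflexivity.
  - assert (U : neg a = lam a (inv a)).
    { unfold lam. rewrite (g_invr Gm), <- zo, (g_idr Ga). reflexivity. }
    rewrite U. set (u := lam a (inv a)). rewrite (g_assocR Ga).
    assert (E : add u d = add (add u (add d (neg u))) u).
    { rewrite !(g_assocR Ga), (g_invl Ga), (g_idr Ga). reflexivity. }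
    rewrite E. unfold u. rewrite (key a (inv a) d Hfa Hdd).
    rewrite !(g_assocR Ga), (g_canl' Ga). reflexivity.
Qed.
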